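(* Let $q\in\mathbb C$ with $|q|=1$ and $q^2\neq 1$, and let $A,B$ be self-adjoint operators on a Hilbert space $\mathcal H$. Suppose $\lambda,\lambda q\in\rho(A)$ and $\mu,\mu q\in\rho(B)$. (i) If $\mathcal D\subseteq\mathcal D(AB)\cap\mathcal D(BA)$ is a linear subspace with $ABf=qBAf$ for all $f\in\mathcal D$, then $\mathcal E:=(B-\mu qI)\mathcal D$ is a linear subspace of $\mathcal D(A)$ and $$R_\mu(B)Ag=qAR_{\mu q}(B)g\qquad(\dagger)$$ for all $g\in\mathcal E$ (in particular $R_{\mu q}(B)g\in\mathcal D(A)$). (ii) If $\mathcal E$ is a linear subspace of $\mathcal D(A)$ such that $R_{\mu q}(B)g\in\mathcal D(A)$ and $(\dagger)$ holds for all $g\in\mathcal E$, then every $f\in\mathcal D:=R_{\mu q}(B)\mathcal E$ lies in $\mathcal D(AB)\cap\mathcal D(BA)$ and satisfies $ABf=qBAf$. (iii) If $\mathcal E$ is a linear subspace of $\mathcal D(A)$ and $(\dagger)$ holds for all $g\in\mathcal E$, then $$R_\lambda(A)R_\mu(B)h=qR_{\mu q}(B)R_{\lambda q}(A)h+\mu\lambda q(q-1)R_\lambda(A)R_\mu(B)R_{\mu q}(B)R_{\lambda q}(A)h\qquad(\dagger\dagger)$$ for all $h\in\mathcal F:=(A-\lambda qI)\mathcal E$. (iv) If $(\dagger\dagger)$ holds for all $h$ in a linear subspace $\mathcal F\subseteq\mathcal H$, then $(\dagger)$ holds (with $R_{\mu q}(B)g\in\mathcal D(A)$) for all $g\in\mathcal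 E:=R_{\lambda q}(A)\mathcal F$.
   Context: For a densely defined closed operator $T$, $\mathcal D(T)$ denotes its domain, $\rho(T)$ its resolvent set and $R_\lambda(T)=(T-\lambda I)^{-1}$ its resolvent. Products of unbounded operators have their natural domains. *)

(* Defs.v *)
From Stdlib Require Import Reals ClassicalEpsilon.
Open Scope R_scope.

Record CC : Type := mkC { Re : R; Im : R }.
Definition Czero : CC := mkC 0 0.
Definition Cone : CC := mkC 1 0.
Definition Cadd (a b : CC) : CC := mkC (Re a + Re b) (Im a + Im b).
Definition Copp (a : CC) : CC := mkC (- Re a) (- Im a).
Definition Csub (a b : CC) : CC := Cadd a (Copp b).
Definition Cmul (a b : CC) : CC :=
  mkC (Re a * Re b - Im a * Im b) (Re a * Im b + Im a * Re b).
Definition Cconj (a : CC) : CC := mkC (Re a) (- Im a).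
Definition Cabs (a : CC) : R := sqrt (Re a * Re a + Im a * Im a).

(** * Complex Hilbert spaces (inner product linear in the first argument) *)
Record HilbertSpace : Type := {
  hcar :> Type;
  hzero : hcar;
  hadd : hcar -> hcar -> hcar;
  hopp : hcar -> hcar;
  hscal : CC -> hcar -> hcar;
  hinner : hcar -> hcar -> CC;
  hadd_assoc : forall x y z, hadd x (hadd y z) = hadd (hadd x y) z;
  hadd_comm : forall x y, hadd x y = hadd y x;
  hadd_zero : forall x, hadd x hzero = x;
  hadd_opp : forall x, hadd x (hopp x) = hzero;
  hscal_one : forall x, hscal Cone x = x;
  hscal_assoc : forall a b x, hscal a (hscal b x) = hscal (Cmul a b) x;
  hscal_distr_v : forall a x y, hscal a (hadd x y) = hadd (hscal a x) (hscal a y);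
  hscal_distr_s : forall a b x, hscal (Cadd a b) x = hadd (hscal a x) (hscal b x);
  hinner_add_l : forall x y z, hinner (hadd x y) z = Cadd (hinner x z) (hinner y z);
  hinner_scal_l : forall a x y, hinner (hscal a x) y = Cmul a (hinner x y);
  hinner_conj : forall x y, hinner y x = Cconj (hinner x y);
  hinner_pos : forall x, 0 <= Re (hinner x x);
  hinner_def : forall x, hinner x x = Czero -> x = hzero;
  hcomplete : forall u : nat -> hcar,
    (forall eps, 0 < eps -> exists N, forall m n, (N <= m)%nat -> (N <= n)%nat ->
        sqrt (Re (hinner (hadd (u m) (hopp (u n))) (hadd (u m) (hopp (u n))))) < eps) ->
    exists l, forall eps, 0 < eps -> exists N, forall n, (N <= n)%nat ->
        sqrt (Re (hinner (hadd (u n) (hopp l)) (hadd (u n) (hopp l)))) < eps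
}.

Arguments hzero {h}.
Arguments hadd {h}.
Arguments hopp {h}.
Arguments hscal {h}.
Arguments hinner {h}.

Definition hsub {H : HilbertSpace} (x y : H) : H := hadd x (hopp y).
Definition hnorm {H : HilbertSpace} (x : H) : R := sqrt (Re (hinner x x)).

Definition is_subspace {H : HilbertSpace} (S : H -> Prop) : Prop :=
  S hzero /\ (forall x y, S x -> S y -> S (hadd x y)) /\
  (forall a x, S x -> S (hscal a x)).

(** * (Possibly unbounded) operators: a domain and an action on it.
    The value of [op_app] outside [op_dom] is irrelevant. *)
Record Op (H : HilbertSpace) : Type := { op_dom : H -> Prop; op_app : H -> H }.
Arguments op_dom {H}.
Arguments op_app {H}.

Definition is_linear_op {H : HilbertSpace} (T : Op H) : Prop :=
  is_subspace (op_dom T) /\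
  (forall x y, op_dom T x -> op_dom T y ->
     op_app T (hadd x y) = hadd (op_app T x) (op_app T y)) /\
  (forall a x, op_dom T x -> op_app T (hscal a x) = hscal a (op_app T x)).

Definition densely_defined {H : HilbertSpace} (T : Op H) : Prop :=
  forall x eps, 0 < eps -> exists y, op_dom T y /\ hnorm (hsub x y) < eps.

Definition adj_dom {H : HilbertSpace} (T : Op H) (y : H) : Prop :=
  exists z, forall x, op_dom T x -> hinner (op_app T x) y = hinner x z.

(** Self-adjoint: densely defined linear operator with T = T-adjoint, i.e.
    D(adj T) = D(T) and (adj T) y = T y for y in D(T). *)
Definition self_adjoint {H : HilbertSpace} (T : Op H) : Prop :=
  is_linear_op T /\ densely_defined T /\
  (forall y, adj_dom T y <-> op_dom T y) /\
  (forall x y, op_dom T x -> op_dom T y ->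
     hinner (op_app T x) y = hinner x (op_app T y)).

Definition shift {H : HilbertSpace} (T : Op H) (l : CC) (x : H) : H :=
  hsub (op_app T x) (hscal l x).

Definition in_resolvent_set {H : HilbertSpace} (T : Op H) (l : CC) : Prop :=
  (forall x y, op_dom T x -> op_dom T y -> shift T l x = shift T l y -> x = y) /\
  (forall h, exists x, op_dom T x /\ shift T l x = h) /\
  (exists M, forall x, op_dom T x -> hnorm x <= M * hnorm (shift T l x)).

(** Resolvent R_lambda(T) h = (T - lambda I)^{-1} h (meaningful for lambda in rho(T)). *)
Definition resolvent {H : HilbertSpace} (T : Op H) (l : CC) (h : H) : H :=
  epsilon (inhabits hzero) (fun x => op_dom T x /\ shift T l x = h).

Definition dom_prod {H : HilbertSpace} (S T : Op H) (f : H) : Prop :=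
  op_dom T f /\ op_dom S (op_app T f).

(** Relation (dagger): R_mu(B) A g = q A R_{mu q}(B) g, together with
    the requirement R_{mu q}(B) g in D(A) making the right side meaningful. *)
Definition dagger {H : HilbertSpace} (A B : Op H) (q mu : CC) (g : H) : Prop :=
  op_dom A (resolvent B (Cmul mu q) g) /\
  resolvent B mu (op_app A g) = hscal q (op_app A (resolvent B (Cmul mu q) g)).

Definition ddagger {H : HilbertSpace} (A B : Op H) (q lam mu : CC) (h : H) : Prop :=
  resolvent A lam (resolvent B mu h) =
  hadd (hscal q (resolvent B (Cmul mu q) (resolvent A (Cmul lam q) h)))
       (hscal (Cmul (Cmul mu lam) (Cmul q (Csub q Cone)))
          (resolvent A lam (resolvent B mu
             (resolvent B (Cmul mu q) (resolvent A (Cmul lam q) h))))).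

(* Main.v *)
Require Import Defs.
From Stdlib Require Import Reals Lra ClassicalEpsilon.
Open Scope R_scope.

Lemma Ceq (a b : CC) : Re a = Re b -> Im a = Im b -> a = b.
Proof. destruct a, b; simpl; intros; subst; reflexivity. Qed.

Ltac ceq := apply Ceq; cbn; unfold Czero, Cone, Cadd, Cmul, Copp, Csub, Cconj; simpl; ring.

Lemma hadd_zero_l (H:HilbertSpace) (x:H) : hadd hzero x = x.
Proof. rewrite hadd_comm. apply hadd_zero. Qed.

Lemma hadd_cancel_l (H:HilbertSpace) (x y z : H) : hadd x y = hadd x z -> y = z.
Proof.
  intro E. rewrite <- (hadd_zero_l H y), <- (hadd_zero_l H z), <- (hadd_opp H x),
   (hadd_comm H x (hopp x)), <- !hadd_assoc, E. reflexivity.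
Qed.

Lemma hscal_zero_s (H:HilbertSpace) (x:H) : hscal Czero x = hzero.
Proof.
  apply (hadd_cancel_l H (hscal Czero x)). rewrite hadd_zero, <- hscal_distr_s.
  f_equal. ceq.
Qed.

Lemma hopp_scal (H:HilbertSpace) (x:H) : hopp x = hscal (Copp Cone) x.
Proof.
  apply (hadd_cancel_l H x). rewrite hadd_opp.
  rewrite <- (hscal_zero_s H x). rewrite <- (hscal_one H x) at 2.
  rewrite <- hscal_distr_s. f_equal. ceq.
Qed.

Lemma swap4 (H:HilbertSpace) (a b c d : H) :
  hadd (hadd a b) (hadd c d) = hadd (hadd a c) (hadd b d).
Proof.
  rewrite <- !hadd_assoc. f_equal. rewrite !hadd_assoc. f_equal. apply hadd_comm.
Qed.

Inductive atm := A0 | A1 | A2 | A3.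
Inductive vexp := VAt (a:atm) | VAdd (e1 e2:vexp) | VScal (s:CC) (e:vexp)
 | VSub (e1 e2 : vexp) | VOpp (e:vexp) | VZero.

Fixpoint veval {H : HilbertSpace} (env : atm -> H) (e : vexp) : H :=
  match e with
  | VAt a => env a
  | VAdd e1 e2 => hadd (veval env e1) (veval env e2)
  | VScal s e => hscal s (veval env e)
  | VSub e1 e2 => hsub (veval env e1) (veval env e2)
  | VOpp e => hopp (veval env e)
  | VZero => hzero
  end.

Definition atm_eqb (a b : atm) : bool :=
  match a, b with
  | A0, A0 | A1, A1 | A2, A2 | A3, A3 => true
  | _, _ => false end.

Fixpoint vcoef (e : vexp) (a : atm) : CC :=
  match e with
  | VAt b => if atm_eqb a b then Cone else Czero
  | VAdd e1 e2 => Cadd (vcoef e1 a) (vcoef e2 a)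
  | VScal s e => Cmul s (vcoef e a)
  | VSub e1 e2 => Csub (vcoef e1 a) (vcoef e2 a)
  | VOpp e => Copp (vcoef e a)
  | VZero => Czero
  end.

Definition lc {H : HilbertSpace} (c : atm -> CC) (env : atm -> H) : H :=
  hadd (hscal (c A0) (env A0)) (hadd (hscal (c A1) (env A1))
    (hadd (hscal (c A2) (env A2)) (hscal (c A3) (env A3)))).

Lemma lc_ext (H : HilbertSpace) (c d : atm -> CC) (env : atm -> H) :
  (forall a, c a = d a) -> lc c env = lc d env.
Proof. intro E. unfold lc. rewrite !E. reflexivity. Qed.

Lemma lc_add (H : HilbertSpace) (c d : atm -> CC) (env : atm -> H) :
  hadd (lc c env) (lc d env) = lc (fun a => Cadd (c a) (d a)) env.
Proof.
  unfold lc. rewrite swap4, <- hscal_distr_s. f_equal.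
  rewrite swap4, <- hscal_distr_s. f_equal.
  rewrite swap4, <- !hscal_distr_s. reflexivity.
Qed.

Lemma lc_scal (H : HilbertSpace) s (c : atm -> CC) (env : atm -> H) :
  hscal s (lc c env) = lc (fun a => Cmul s (c a)) env.
Proof. unfold lc. rewrite !hscal_distr_v, !hscal_assoc. reflexivity. Qed.

Lemma lc_opp (H : HilbertSpace) (c : atm -> CC) (env : atm -> H) :
  hopp (lc c env) = lc (fun a => Copp (c a)) env.
Proof. rewrite hopp_scal, lc_scal. apply lc_ext. intro a. ceq. Qed.

Lemma lc_zero (H : HilbertSpace) (env : atm -> H) :
  hzero = lc (fun _ => Czero) env.
Proof. unfold lc. rewrite !hscal_zero_s, !hadd_zero. reflexivity. Qed.

Lemma lc_atom (H : HilbertSpace) (env : atm -> H) a :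
  env a = lc (fun b => if atm_eqb b a then Cone else Czero) env.
Proof.
  unfold lc; destruct a; simpl;
  repeat rewrite ?hscal_zero_s, ?hscal_one, ?hadd_zero, ?hadd_zero_l; reflexivity.
Qed.

Lemma veval_lc (H : HilbertSpace) (env : atm -> H) e :
  veval env e = lc (vcoef e) env.
Proof.
  induction e; simpl.
  - apply lc_atom.
  - rewrite IHe1, IHe2, lc_add. reflexivity.
  - rewrite IHe, lc_scal. reflexivity.
  - unfold hsub. rewrite IHe1, IHe2, lc_opp, lc_add. reflexivity.
  - rewrite IHe, lc_opp. reflexivity.
  - apply lc_zero.
Qed.

Ltac reify_v x0 x1 x2 x3 t :=
  lazymatch t with
  | hadd ?a ?b => let ra := reify_v x0 x1 x2 x3 a in
                  let rb := reify_v x0 x1 x2 x3 b in constr:(VAdd ra rb)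
  | hsub ?a ?b => let ra := reify_v x0 x1 x2 x3 a in
                  let rb := reify_v x0 x1 x2 x3 b in constr:(VSub ra rb)
  | hscal ?s ?a => let ra := reify_v x0 x1 x2 x3 a in constr:(VScal s ra)
  | hopp ?a => let ra := reify_v x0 x1 x2 x3 a in constr:(VOpp ra)
  | @hzero _ => constr:(VZero)
  | _ => lazymatch constr:((t,x0,x1,x2,x3)) with
         | (?u,?u,_,_,_) => constr:(VAt A0)
         | (?u,_,?u,_,_) => constr:(VAt A1)
         | (?u,_,_,?u,_) => constr:(VAt A2)
         | (?u,_,_,_,?u) => constr:(VAt A3)
         end
  end.

Ltac vsolve x0 x1 x2 x3 :=
  lazymatch goal with |- ?l = ?r =>
    let rl := reify_v x0 x1 x2 x3 l in
    let rr := reify_v x0 x1 x2 x3 r in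
    let env := constr:(fun at0 : atm => match at0 with A0 => x0 | A1 => x1 | A2 => x2 | A3 => x3 end) in
    change (veval env rl = veval env rr); rewrite !veval_lc; apply lc_ext;
    intros []; ceq
  end.

Lemma hsub_eq (H : HilbertSpace) (x y z : H) : hsub x y = z -> x = hadd z y.
Proof. intro E. rewrite <- E. vsolve x y x x. Qed.

Section dummy. End dummy.

Lemma dom_zero (H : HilbertSpace) (T : Op H) : is_linear_op T -> op_dom T hzero.
Proof. intros [[D0 _] _]. exact D0. Qed.
Lemma dom_add (H : HilbertSpace) (T : Op H) x y : is_linear_op T ->
  op_dom T x -> op_dom T y -> op_dom T (hadd x y).
Proof. intros [[_ [D _]] _]. apply D. Qed.
Lemma dom_scal (H : HilbertSpace) (T : Op H) a x : is_linear_op T ->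
  op_dom T x -> op_dom T (hscal a x).
Proof. intros [[_ [_ D]] _]. apply D. Qed.
Lemma dom_sub (H : HilbertSpace) (T : Op H) x y : is_linear_op T ->
  op_dom T x -> op_dom T y -> op_dom T (hsub x y).
Proof. intros L Dx Dy. unfold hsub. rewrite hopp_scal. apply dom_add; auto. apply dom_scal; auto. Qed.

Lemma app_add (H : HilbertSpace) (T : Op H) x y : is_linear_op T ->
  op_dom T x -> op_dom T y -> op_app T (hadd x y) = hadd (op_app T x) (op_app T y).
Proof. intros [_ [A _]]. apply A. Qed.
Lemma app_scal (H : HilbertSpace) (T : Op H) a x : is_linear_op T ->
  op_dom T x -> op_app T (hscal a x) = hscal a (op_app T x).
Proof. intros [_ [_ A]]. apply A. Qed.
Lemma app_sub (H : HilbertSpace) (T : Op H) x y : is_linear_op T ->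
  op_dom T x -> op_dom T y -> op_app T (hsub x y) = hsub (op_app T x) (op_app T y).
Proof.
  intros L Dx Dy. unfold hsub. rewrite !hopp_scal, app_add, app_scal; auto.
  apply dom_scal; auto.
Qed.
Lemma app_zero (H : HilbertSpace) (T : Op H) : is_linear_op T -> op_app T hzero = hzero.
Proof.
  intros L. assert (E : (hzero : H) = hscal Czero hzero) by (rewrite hscal_zero_s; auto).
  rewrite E at 1. rewrite app_scal. apply hscal_zero_s. auto. apply dom_zero; auto.
Qed.

Lemma shift_add (H : HilbertSpace) (T : Op H) l x y : is_linear_op T ->
  op_dom T x -> op_dom T y -> shift T l (hadd x y) = hadd (shift T l x) (shift T l y).
Proof. intros L Dx Dy. unfold shift. rewrite app_add; auto. vsolve (op_app T x) (op_app T y) x y. Qed.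
Lemma shift_scal (H : HilbertSpace) (T : Op H) l a x : is_linear_op T ->
  op_dom T x -> shift T l (hscal a x) = hscal a (shift T l x).
Proof. intros L Dx. unfold shift. rewrite app_scal; auto. vsolve (op_app T x) x x x. Qed.
Lemma shift_zero (H : HilbertSpace) (T : Op H) l : is_linear_op T -> shift T l hzero = hzero.
Proof. intros L. unfold shift. rewrite app_zero; auto. vsolve (@hzero H) (@hzero H) (@hzero H) (@hzero H). Qed.
Lemma shift_change (H : HilbertSpace) (T : Op H) l l' x :
  shift T l x = hadd (shift T l' x) (hscal (Csub l' l) x).
Proof. unfold shift. vsolve (op_app T x) x x x. Qed.

Lemma res_spec (H : HilbertSpace) (T : Op H) l h : in_resolvent_set T l ->
  op_dom T (resolvent T l h) /\ shift T l (resolvent T l h) = h.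
Proof. intros [_ [Hs _]]. unfold resolvent. apply epsilon_spec. apply Hs. Qed.

Lemma res_unique (H : HilbertSpace) (T : Op H) l x h : in_resolvent_set T l ->
  op_dom T x -> shift T l x = h -> resolvent T l h = x.
Proof.
  intros Hr Dx Sx. destruct (res_spec H T l h Hr) as [D1 S1].
  destruct Hr as [Hinj _]. apply Hinj; auto. rewrite S1, Sx. reflexivity.
Qed.

Lemma res_shift (H : HilbertSpace) (T : Op H) l x : in_resolvent_set T l ->
  op_dom T x -> resolvent T l (shift T l x) = x.
Proof. intros. apply res_unique; auto. Qed.

Lemma res_add (H : HilbertSpace) (T : Op H) l x y : is_linear_op T -> in_resolvent_set T l ->
  resolvent T l (hadd x y) = hadd (resolvent T l x) (resolvent T l y).
Proof.
  intros L Hr. destruct (res_spec H T l x Hr) as [Dx Sx].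
  destruct (res_spec H T l y Hr) as [Dy Sy].
  apply res_unique; auto. apply dom_add; auto. rewrite shift_add, Sx, Sy; auto.
Qed.
Lemma res_scal (H : HilbertSpace) (T : Op H) l a x : is_linear_op T -> in_resolvent_set T l ->
  resolvent T l (hscal a x) = hscal a (resolvent T l x).
Proof.
  intros L Hr. destruct (res_spec H T l x Hr) as [Dx Sx].
  apply res_unique; auto. apply dom_scal; auto. rewrite shift_scal, Sx; auto.
Qed.
Lemma res_sub (H : HilbertSpace) (T : Op H) l x y : is_linear_op T -> in_resolvent_set T l ->
  resolvent T l (hsub x y) = hsub (resolvent T l x) (resolvent T l y).
Proof.
  intros L Hr. unfold hsub. rewrite !hopp_scal, res_add, res_scal; auto.
Qed.

Lemma res_step (H : HilbertSpace) (B : Op H) mu q g : is_linear_op B ->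
  in_resolvent_set B mu -> in_resolvent_set B (Cmul mu q) ->
  resolvent B mu g = hadd (resolvent B (Cmul mu q) g)
     (hscal (Cmul mu (Csub Cone q)) (resolvent B mu (resolvent B (Cmul mu q) g))).
Proof.
  intros L R1 R2.
  destruct (res_spec H B _ g R2) as [Df Sf].
  destruct (res_spec H B _ (resolvent B (Cmul mu q) g) R1) as [Dk Sk].
  apply res_unique; auto. apply dom_add; auto. apply dom_scal; auto.
  rewrite shift_add, shift_scal, Sk; auto. 2: apply dom_scal; auto.
  rewrite (shift_change H B mu (Cmul mu q)), Sf.
  vsolve g (resolvent B (Cmul mu q) g) g g.
Qed.

Lemma q_inv q : Cabs q = 1 -> Cmul (Cconj q) q = Cone.
Proof.
  unfold Cabs; intro E.
  assert (Hs : Re q * Re q + Im q * Im q = 1).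
  { rewrite <- (sqrt_sqrt (Re q * Re q + Im q * Im q)). rewrite E; ring. nra. }
  apply Ceq; simpl; nra.
Qed.

Lemma unscale (H : HilbertSpace) (x : H) q : Cmul (Cconj q) q = Cone ->
  x = hscal (Cconj q) (hscal q x).
Proof. intro E. rewrite hscal_assoc, E, hscal_one. reflexivity. Qed.

Theorem mainTheorem2 (H : HilbertSpace) (q lam mu : CC) (A B : Op H) :
  Cabs q = 1 -> Cmul q q <> Cone ->
  self_adjoint A -> self_adjoint B ->
  in_resolvent_set A lam -> in_resolvent_set A (Cmul lam q) ->
  in_resolvent_set B mu -> in_resolvent_set B (Cmul mu q) ->
  (* (i) *)
  (forall D : H -> Prop,
     is_subspace D ->
     (forall f, D f -> dom_prod A B f /\ dom_prod B A f) ->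
     (forall f, D f -> op_app A (op_app B f) = hscal q (op_app B (op_app A f))) ->
     let E := fun g => exists f, D f /\ g = shift B (Cmul mu q) f in
     is_subspace E /\ (forall g, E g -> op_dom A g) /\
     (forall g, E g -> dagger A B q mu g)) /\
  (* (ii) *)
  (forall E : H -> Prop,
     is_subspace E -> (forall g, E g -> op_dom A g) ->
     (forall g, E g -> dagger A B q mu g) ->
     let D := fun f => exists g, E g /\ f = resolvent B (Cmul mu q) g in
     forall f, D f ->
       dom_prod A B f /\ dom_prod B A f /\
       op_app A (op_app B f) = hscal q (op_app B (op_app A f))) /\
  (* (iii) *)
  (forall E : H -> Prop,
     is_subspace E -> (forall g, E g -> op_dom A g) ->
     (forall g, E g -> dagger A B q mu g) ->
     let F := fun h => exists g, E g /\ h = shift A (Cmul lam q) g in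
     forall h, F h -> ddagger A B q lam mu h) /\
  (* (iv) *)
  (forall F : H -> Prop,
     is_subspace F ->
     (forall h, F h -> ddagger A B q lam mu h) ->
     let E := fun g => exists h, F h /\ g = resolvent A (Cmul lam q) h in
     forall g, E g -> op_dom A g /\ dagger A B q mu g).
Proof.
  intros Hq _ SA SB RA1 RA2 RB1 RB2.
  pose proof (q_inv q Hq) as Hqi.
  destruct SA as [LA _]. destruct SB as [LB _].
  split; [|split; [|split]].
  -
    intros D HD Hdom Hcomm. cbv zeta beta.
    destruct HD as [D0 [Dadd Dscal]].
    split; [split; [|split]|split].
    + exists hzero. split; auto. rewrite shift_zero; auto.
    + intros x y [f1 [D1 ->]] [f2 [D2 ->]]. exists (hadd f1 f2). split; auto.
      destruct (Hdom f1 D1) as [[B1 _] _]. destruct (Hdom f2 D2) as [[B2 _] _].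
      rewrite shift_add; auto.
    + intros a x [f1 [D1 ->]]. exists (hscal a f1). split; auto.
      destruct (Hdom f1 D1) as [[B1 _] _]. rewrite shift_scal; auto.
    + intros g [f [Df ->]]. destruct (Hdom f Df) as [[DBf DABf] [DAf DBAf]].
      unfold shift. apply dom_sub; auto. apply dom_scal; auto.
    + intros g [f [Df ->]]. destruct (Hdom f Df) as [[DBf DABf] [DAf DBAf]].
      unfold dagger. rewrite res_shift; auto. split; auto.
      apply res_unique; auto. apply dom_scal; auto.
      unfold shift. rewrite (app_scal H B), (app_sub H A), (app_scal H A), Hcomm; auto.
      2: apply dom_scal; auto.
      vsolve (op_app B (op_app A f)) (op_app A f) f f.
  -
    intros E HE HEA Hdag. cbv zeta beta. intros f [g [Eg ->]].
    destruct (res_spec H B _ g RB2) as [DBf Sf].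
    destruct (Hdag g Eg) as [DAf Hd].
    pose proof (HEA g Eg) as DAg.
    set (f := resolvent B (Cmul mu q) g) in *.
    unfold shift in Sf. apply hsub_eq in Sf.
    destruct (res_spec H B _ (op_app A g) RB1) as [DB2 S2].
    rewrite Hd in DB2, S2.
    assert (DBAf : op_dom B (op_app A f)).
    { rewrite (unscale H (op_app A f) q Hqi). apply dom_scal; auto. }
    split; [|split].
    + split; auto. rewrite Sf. apply dom_add; auto. apply dom_scal; auto.
    + split; auto.
    + rewrite Sf, (app_add H A), (app_scal H A); auto. 2: apply dom_scal; auto.
      rewrite <- (app_scal H B q (op_app A f)); auto.
      unfold shift in S2. apply hsub_eq in S2. rewrite S2.
      vsolve (op_app A g) (op_app A f) f f.
  -
    intros E HE HEA Hdag. cbv zeta beta. intros h [g [Eg ->]].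
    pose proof (HEA g Eg) as DAg.
    unfold ddagger. rewrite (res_shift H A _ g RA2 DAg).
    destruct (Hdag g Eg) as [DAf Hd].
    destruct (res_spec H B _ g RB2) as [DBf Sf].
    pose proof (res_step H B mu q g LB RB1 RB2) as Step.
    destruct (res_spec H B _ (resolvent B (Cmul mu q) g) RB1) as [DBk Sk].
    set (f := resolvent B (Cmul mu q) g) in *.
    set (k := resolvent B mu f) in *.
    destruct (res_spec H A _ k RA1) as [DAj Sj].
    unfold shift at 1. rewrite (res_sub H B), (res_scal H B), Hd, Step; auto.
    apply res_unique; auto.
    + apply dom_add; try apply dom_scal; auto.
    + rewrite (shift_add H A); try (apply dom_scal; auto); auto.
      rewrite (shift_scal H A lam q f), (shift_scal H A lam _ (resolvent A lam k)), Sj; auto.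
      unfold shift. vsolve (op_app A f) f k k.
  -
    intros F HF Hdd. cbv zeta beta. intros g [h [Fh ->]].
    destruct (res_spec H A _ h RA2) as [DAg Sg].
    pose proof (Hdd h Fh) as Hm. unfold ddagger in Hm.
    set (g := resolvent A (Cmul lam q) h) in *.
    pose proof (res_step H B mu q g LB RB1 RB2) as Step.
    destruct (res_spec H B _ g RB2) as [DBf Sf].
    set (f := resolvent B (Cmul mu q) g) in *.
    set (k := resolvent B mu f) in *.
    destruct (res_spec H A _ k RA1) as [DAj Sj].
    set (j := resolvent A lam k) in *.
    destruct (res_spec H A _ (resolvent B mu h) RA1) as [DAm Sm].
    set (m := resolvent A lam (resolvent B mu h)) in *.
    set (d := Cmul (Cmul mu lam) (Cmul q (Csub q Cone))) in *.
    assert (Ef : hscal q f = hsub m (hscal d j)).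
    { rewrite Hm. vsolve f j f f. }
    assert (DAf : op_dom A f).
    { rewrite (unscale H f q Hqi), Ef. apply dom_scal; auto. apply dom_sub; auto.
      apply dom_scal; auto. }
    split; auto. unfold dagger. split; auto.
    unfold shift in Sg. apply hsub_eq in Sg. rewrite Sg.
    rewrite (res_add H B), (res_scal H B), Step; auto.
    fold f. rewrite <- (app_scal H A q f); auto. rewrite Ef.
    rewrite (app_sub H A), (app_scal H A); auto. 2: apply dom_scal; auto.
    unfold shift in Sm, Sj. apply hsub_eq in Sm. apply hsub_eq in Sj.
    rewrite Sm, Sj, Hm.
    vsolve (resolvent B mu h) f j k.
Qed.
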